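(* Let $X,Y$ be polynomial orbit-finite sets and $R\subseteq X\times Y$ a finitely supported binary relation such that for every $x\in X$ the set $\{y: (x,y)\in R\}$ is nonempty. Then there is a finitely supported function $f:X\to Y$ such that $(x,f(x))\in R$ for all $x\in X$.
   Context: Atoms $\mathbb A$ are a countably infinite set; atom automorphisms are bijections of $\mathbb A$. Polynomial orbit-finite sets are built from $\mathbb A$ and singletons by finite products and disjoint unions with the natural action; automorphisms act on subsets elementwise and on functions by $\pi(f)=\pi\circ f\circ\pi^{-1}$. An object is finitely supported if there is a finite tuple $\bar a$ of atoms such that every automorphism fixing $\bar a$ pointwise fixes the object. *)

(* Defs.v *)
From Stdlib Require Import List.

Definition atom := nat.

Definition is_autom (pi pinv : atom -> atom) : Prop :=
  (forall a, pinv (pi a) = a) /\ (forall a, pi (pinv a) = a).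

(* Syntax of polynomial orbit-finite sets: built from A and singletons
   by finite products and disjoint unions. *)
Inductive pof : Type :=
  | PAtom : pof
  | PUnit : pof
  | PProd : pof -> pof -> pof
  | PSum  : pof -> pof -> pof.

Fixpoint el (p : pof) : Type :=
  match p with
  | PAtom => atom
  | PUnit => unit
  | PProd p q => (el p * el q)%type
  | PSum p q => (el p + el q)%type
  end.

Fixpoint act (pi : atom -> atom) (p : pof) : el p -> el p :=
  match p return el p -> el p with
  | PAtom => fun a => pi a
  | PUnit => fun u => u
  | PProd p q => fun z => (act pi p (fst z), act pi q (snd z))
  | PSum p q => fun z => match z with
                         | inl x => inl (act pi p x)
                         | inr y => inr (act pi q y)
                         end
  end.

Definition fixes_all (pi : atom -> atom) (s : list atom) : Prop :=
  forall a, In a s -> pi a = a.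

(* Subsets of X (as predicates); action pi(S) = { pi z | z in S }. *)
Definition set_fixed (p : pof) (pi : atom -> atom) (S : el p -> Prop) : Prop :=
  forall w, S w <-> exists z, S z /\ act pi p z = w.

Definition fs_set (p : pof) (S : el p -> Prop) : Prop :=
  exists s : list atom, forall pi pinv, is_autom pi pinv ->
    fixes_all pi s -> set_fixed p pi S.

(* Functions; action pi(f) = pi o f o pi^{-1}. *)
Definition fs_fun (p q : pof) (f : el p -> el q) : Prop :=
  exists s : list atom, forall pi pinv, is_autom pi pinv ->
    fixes_all pi s -> forall x, act pi q (f (act pinv p x)) = f x.

(* Main.v *)
Require Import Defs.
From Stdlib Require Import List Arith Lia Classical ClassicalEpsilon FunctionalExtensionality PropExtensionality ProofIrrelevance.
Import ListNotations.

Fixpoint atoms (p : pof) : el p -> list atom :=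
  match p return el p -> list atom with
  | PAtom => fun a => a :: nil
  | PUnit => fun _ => nil
  | PProd p q => fun z => atoms p (fst z) ++ atoms q (snd z)
  | PSum p q => fun z => match z with inl x => atoms p x | inr y => atoms q y end
  end.

Fixpoint psize (p : pof) : nat :=
  match p with
  | PAtom => 1 | PUnit => 0
  | PProd p q => psize p + psize q
  | PSum p q => psize p + psize q
  end.

Fixpoint dflt (p : pof) : el p :=
  match p return el p with
  | PAtom => 0 | PUnit => tt
  | PProd p q => (dflt p, dflt q)
  | PSum p q => inl (dflt p)
  end.

Lemma atoms_len p (z : el p) : length (atoms p z) <= psize p.
Proof.
  induction p; simpl in *; try lia.
  - destruct z; simpl; rewrite length_app; specialize (IHp1 e); specialize (IHp2 e0); lia.
  - destruct z as [a|a]; [specialize (IHp1 a)|specialize (IHp2 a)]; lia.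
Qed.

Lemma act_comp f g p (z : el p) : act f p (act g p z) = act (fun a => f (g a)) p z.
Proof.
  induction p; simpl; auto.
  - destruct z; simpl; rewrite IHp1, IHp2; auto.
  - destruct z; simpl; [rewrite IHp1|rewrite IHp2]; auto.
Qed.

Lemma act_ext_on f g p (z : el p) :
  (forall a, In a (atoms p z) -> f a = g a) -> act f p z = act g p z.
Proof.
  induction p; simpl; intros H; auto.
  - destruct z; simpl in *. rewrite IHp1, IHp2; auto;
      intros; apply H; apply in_or_app; auto.
  - destruct z; simpl; [rewrite IHp1|rewrite IHp2]; auto.
Qed.

Lemma act_id p (z : el p) : act (fun a => a) p z = z.
Proof.
  induction p; simpl; auto.
  - destruct z; simpl; rewrite IHp1, IHp2; auto.
  - destruct z; simpl; [rewrite IHp1|rewrite IHp2]; auto.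
Qed.

Lemma act_eq_atoms f g p (z : el p) :
  act f p z = act g p z -> forall a, In a (atoms p z) -> f a = g a.
Proof.
  induction p; simpl; intros H a Ha.
  - destruct Ha as [<-|[]]; auto.
  - destruct Ha.
  - destruct z; simpl in *. injection H; intros.
    apply in_app_or in Ha; destruct Ha; eauto.
  - destruct z; simpl in *; injection H; intros; eauto.
Qed.

Lemma atoms_act f p (z : el p) : atoms p (act f p z) = map f (atoms p z).
Proof.
  induction p; simpl; auto.
  - destruct z; simpl; rewrite IHp1, IHp2, map_app; auto.
  - destruct z; simpl; auto.
Qed.

Lemma autom_comp pi pinv sg sginv : is_autom pi pinv -> is_autom sg sginv ->
  is_autom (fun a => pi (sg a)) (fun a => sginv (pinv a)).
Proof.
  intros [H1 H2] [H3 H4]; split; intros a.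
  - rewrite H1; auto.
  - rewrite H4; auto.
Qed.

Lemma autom_sym pi pinv : is_autom pi pinv -> is_autom pinv pi.
Proof. intros [H1 H2]; split; auto. Qed.

Lemma fixes_inv pi pinv S : is_autom pi pinv -> fixes_all pi S -> fixes_all pinv S.
Proof.
  intros [H1 H2] H a Ha. rewrite <- (H a Ha) at 1. auto.
Qed.

Lemma fixes_comp pi sg S : fixes_all pi S -> fixes_all sg S -> fixes_all (fun a => pi (sg a)) S.
Proof. intros H1 H2 a Ha. rewrite H2, H1; auto. Qed.

Definition swap (f e : atom) (a : atom) : atom :=
  if Nat.eqb a f then e else if Nat.eqb a e then f else a.

Lemma swap_autom f e : is_autom (swap f e) (swap f e).
Proof.
  unfold swap; split; intros a;
  (destruct (Nat.eqb_spec a f); [|destruct (Nat.eqb_spec a e)]);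
  repeat (match goal with |- context [Nat.eqb ?x ?y] => destruct (Nat.eqb_spec x y) end);
  try lia.
Qed.

Lemma filter_swap_le (b : atom -> bool) f e l :
  ~ In e l -> b e = false -> length (filter b (map (swap f e) l)) <= length (filter b l).
Proof.
  induction l as [|a l IH]; simpl; intros Hn Hb; auto.
  unfold swap at 1. destruct (Nat.eqb_spec a f).
  - subst. rewrite Hb. destruct (b f); simpl; specialize (IH (fun h => Hn (or_intror h)) Hb); lia.
  - destruct (Nat.eqb_spec a e). { exfalso; apply Hn; auto. }
    destruct (b a); simpl; specialize (IH (fun h => Hn (or_intror h)) Hb); lia.
Qed.

Lemma filter_swap_lt (b : atom -> bool) f e l :
  ~ In e l -> b e = false -> In f l -> b f = true ->
  length (filter b (map (swap f e) l)) < length (filter b l).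
Proof.
  induction l as [|a l IH]; simpl; intros Hn Hb Hf Hbf; [destruct Hf|].
  unfold swap at 1. destruct (Nat.eqb_spec a f).
  - subst. rewrite Hb, Hbf. simpl.
    pose proof (filter_swap_le b f e l (fun h => Hn (or_intror h)) Hb). lia.
  - destruct (Nat.eqb_spec a e). { exfalso; apply Hn; auto. }
    destruct Hf as [->|Hf]; [congruence|].
    specialize (IH (fun h => Hn (or_intror h)) Hb Hf Hbf).
    destruct (b a); simpl; lia.
Qed.

Lemma pigeon (E L : list atom) f : NoDup E -> ~ In f E -> In f L -> length L < length E ->
  exists e, In e E /\ ~ In e L.
Proof.
  intros HE Hf HL Hlen.
  destruct (classic (exists e, In e E /\ ~ In e L)) as [H|H]; auto. exfalso.
  assert (Hi : incl (f :: E) L).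
  { intros a [<-|Ha]; auto. destruct (in_dec Nat.eq_dec a L); auto.
    exfalso; apply H; eauto. }
  apply NoDup_incl_length in Hi; [simpl in Hi; lia|constructor; auto].
Qed.

Lemma good_exists X Y (R : el (PProd X Y) -> Prop) (s S E : list atom) :
  (forall pi pinv, is_autom pi pinv -> fixes_all pi s -> set_fixed (PProd X Y) pi R) ->
  incl s S -> incl E S -> NoDup E -> (forall e, In e E -> ~ In e s) ->
  psize X + psize Y < length E ->
  forall r y, R (r, y) -> exists y', R (r, y') /\
     forall a, In a (atoms Y y') -> In a (atoms X r ++ S).
Proof.
  intros Hs HsS HES HE HEs Hlen r.
  pose (badb := fun a => if in_dec Nat.eq_dec a (atoms X r ++ S) then false else true).
  intros y. remember (length (filter badb (atoms Y y))) as m.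
  revert y Heqm. induction m as [m IH] using lt_wf_ind. intros y Hm Ry.
  destruct (filter badb (atoms Y y)) as [|f l] eqn:Hfl.
  - exists y; split; auto. intros a Ha.
    destruct (in_dec Nat.eq_dec a (atoms X r ++ S)) as [i|n]; auto.
    assert (In a (filter badb (atoms Y y))).
    { apply filter_In; split; auto. unfold badb; destruct (in_dec _ _ _); tauto. }
    rewrite Hfl in H; destruct H.
  - assert (Hf : In f (filter badb (atoms Y y))) by (rewrite Hfl; left; auto).
    apply filter_In in Hf as [Hfy Hbf].
    unfold badb in Hbf. destruct (in_dec Nat.eq_dec f (atoms X r ++ S)) as [_|Hnf]; [discriminate|].
    assert (HfE : ~ In f E) by (intro h; apply Hnf; apply in_or_app; right; auto).
    destruct (pigeon E (atoms X r ++ atoms Y y) f HE HfE) as [e [HeE HeL]].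
    { apply in_or_app; auto. }
    { rewrite length_app. pose proof (atoms_len X r); pose proof (atoms_len Y y); lia. }
    assert (Hfs : ~ In f s) by (intro h; apply Hnf; apply in_or_app; right; auto).
    assert (Hes : ~ In e s) by auto.
    assert (Hfix : fixes_all (swap f e) s).
    { intros a Ha. unfold swap. destruct (Nat.eqb_spec a f); [subst; tauto|].
      destruct (Nat.eqb_spec a e); [subst; tauto|auto]. }
    assert (Hr : act (swap f e) X r = r).
    { rewrite <- (act_id X r) at 2. apply act_ext_on. intros a Ha. unfold swap.
      destruct (Nat.eqb_spec a f); [subst; exfalso; apply Hnf; apply in_or_app; auto|].
      destruct (Nat.eqb_spec a e); [subst; exfalso; apply HeL; apply in_or_app; auto|auto]. }
    assert (Ry' : R (r, act (swap f e) Y y)).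
    { apply (Hs _ _ (swap_autom f e) Hfix). exists (r, y); split; auto.
      simpl. rewrite Hr; auto. }
    refine (IH _ _ _ eq_refl Ry').
    rewrite atoms_act, Hm, <- Hfl. apply filter_swap_lt; auto.
    + intro h; apply HeL; apply in_or_app; auto.
    + unfold badb. destruct (in_dec _ _ _) as [|n]; auto. exfalso; apply n; apply in_or_app; auto.
    + unfold badb. destruct (in_dec _ _ _); tauto.
Qed.

Lemma le_list_sum a s : In a s -> a <= list_sum s.
Proof. induction s; simpl; intros []; subst; try lia. specialize (IHs H); lia. Qed.

Theorem mainTheorem9 (X Y : pof) (R : el (PProd X Y) -> Prop) :
  fs_set (PProd X Y) R ->
  (forall x : el X, exists y : el Y, R (x, y)) ->
  exists f : el X -> el Y, fs_fun X Y f /\ forall x : el X, R (x, f x).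
Proof.
  intros [s Hs] Htot.
  set (E := seq (S (list_sum s)) (psize X + psize Y + 1)).
  set (S := s ++ E).
  assert (HsS : incl s S) by (intros a h; apply in_or_app; auto).
  assert (HES : incl E S) by (intros a h; apply in_or_app; auto).
  assert (HE : NoDup E) by apply seq_NoDup.
  assert (HEs : forall e, In e E -> ~ In e s).
  { intros e He Hes. apply in_seq in He. apply le_list_sum in Hes. lia. }
  assert (Hlen : psize X + psize Y < length E) by (unfold E; rewrite length_seq; lia).
  pose proof (good_exists X Y R s S E Hs HsS HES HE HEs Hlen) as Hgood.
  assert (Hg : exists g : el X -> el Y, forall r, R (r, g r) /\
             forall a, In a (atoms Y (g r)) -> In a (atoms X r ++ S)).
  { assert (H : forall r, exists y, R (r, y) /\
             forall a, In a (atoms Y y) -> In a (atoms X r ++ S)).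
    { intros r. destruct (Htot r) as [y Hy]. eauto. }
    exists (fun r => proj1_sig (constructive_indefinite_description _ (H r))).
    intros r. exact (proj2_sig (constructive_indefinite_description _ (H r))). }
  destruct Hg as [g Hg].
  set (Orb := fun (x z : el X) => exists pi pinv, is_autom pi pinv /\ fixes_all pi S /\ act pi X z = x).
  set (rep := fun x => epsilon (inhabits (dflt X)) (Orb x)).
  assert (Hrep : forall x, Orb x (rep x)).
  { intros x. unfold rep. apply epsilon_spec. exists x, (fun a => a), (fun a => a).
    split; [split; auto|split; [intros a _; auto|apply act_id]]. }
  assert (Horb : forall pi pinv x0, is_autom pi pinv -> fixes_all pi S ->
             rep (act pi X x0) = rep x0).
  { intros pi pinv x0 Ha Hf. unfold rep. f_equal. extensionality z.
    apply propositional_extensionality. split.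
    - intros (sg & sginv & Hsa & Hsf & Hsz).
      exists (fun a => pinv (sg a)), (fun a => sginv (pi a)).
      split; [apply autom_comp; auto; apply autom_sym; auto|].
      split; [apply fixes_comp; auto; eapply fixes_inv; eauto|].
      rewrite <- act_comp, Hsz, act_comp. rewrite <- (act_id X x0) at 2.
      apply act_ext_on. intros a _. apply (proj1 Ha).
    - intros (sg & sginv & Hsa & Hsf & Hsz).
      exists (fun a => pi (sg a)), (fun a => sginv (pinv a)).
      split; [apply autom_comp; auto|].
      split; [apply fixes_comp; auto|].
      rewrite <- act_comp, Hsz; auto. }
  assert (Hpic : exists pic : el X -> atom -> atom, forall x, exists pinv,
            is_autom (pic x) pinv /\ fixes_all (pic x) S /\ act (pic x) X (rep x) = x).
  { exists (fun x => proj1_sig (constructive_indefinite_description _ (Hrep x))).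
    intros x. exact (proj2_sig (constructive_indefinite_description _ (Hrep x))). }
  destruct Hpic as [pic Hpic].
  set (f := fun x => act (pic x) Y (g (rep x))).
  assert (Heqv : forall pi pinv x0, is_autom pi pinv -> fixes_all pi S ->
            f (act pi X x0) = act pi Y (f x0)).
  { intros pi pinv x0 Ha Hf. unfold f.
    rewrite (Horb _ _ _ Ha Hf). rewrite act_comp.
    destruct (Hpic (act pi X x0)) as (q1 & _ & Hf1 & He1).
    destruct (Hpic x0) as (q2 & _ & Hf2 & He2).
    rewrite (Horb _ _ _ Ha Hf) in He1.
    apply act_ext_on. intros a Ha'.
    destruct (Hg (rep x0)) as [_ Hgood'].
    apply Hgood' in Ha'. apply in_app_or in Ha'. destruct Ha' as [Ha'|Ha'].
    - apply (act_eq_atoms (pic (act pi X x0)) (fun a => pi (pic x0 a)) X (rep x0)); auto.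
      rewrite He1, <- (act_comp pi (pic x0)), He2; auto.
    - rewrite Hf1, Hf2, Hf; auto. }
  exists f. split.
  - exists S. intros pi pinv Ha Hf x.
    assert (Ha' := autom_sym _ _ Ha). assert (Hf' := fixes_inv _ _ _ Ha Hf).
    rewrite (Heqv _ _ _ Ha' Hf'), act_comp. rewrite <- (act_id Y (f x)) at 2.
    apply act_ext_on. intros a _. apply (proj2 Ha).
  - intros x. unfold f.
    destruct (Hpic x) as (pinv & Ha & Hf & He).
    destruct (Hg (rep x)) as [HR _].
    apply (Hs _ _ Ha (fun a h => Hf a (HsS a h))).
    exists (rep x, g (rep x)). split; auto. simpl. rewrite He; auto.
Qed.
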